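(* In the setting of the context, let $\mathbf{C}\in T$ be the unique element satisfying $\mathbf{A}+\frac{q\mathbf{B}\mathbf{C}-q^{-1}\mathbf{C}\mathbf{B}}{q^2-q^{-2}}=\frac{(\mathbf{a}+\mathbf{a}^{-1})(\Lambda+\Lambda^{-1})+(\mathbf{b}+\mathbf{b}^{-1})(\mathbf{c}+\mathbf{c}^{-1})}{q+q^{-1}}$, $\mathbf{B}+\frac{q\mathbf{C}\mathbf{A}-q^{-1}\mathbf{A}\mathbf{C}}{q^2-q^{-2}}=\frac{(\mathbf{b}+\mathbf{b}^{-1})(\Lambda+\Lambda^{-1})+(\mathbf{c}+\mathbf{c}^{-1})(\mathbf{a}+\mathbf{a}^{-1})}{q+q^{-1}}$ and $\mathbf{C}+\frac{q\mathbf{A}\mathbf{B}-q^{-1}\mathbf{B}\mathbf{A}}{q^2-q^{-2}}=\frac{(\mathbf{c}+\mathbf{c}^{-1})(\Lambda+\Lambda^{-1})+(\mathbf{a}+\mathbf{a}^{-1})(\mathbf{b}+\mathbf{b}^{-1})}{q+q^{-1}}$. Then $$\mathbf{A}+\frac{q\mathbf{B}\mathbf{C}-q^{-1}\mathbf{C}\mathbf{B}}{q^2-q^{-2}}=0,\quad \mathbf{B}+\frac{q\mathbf{C}\mathbf{A}-q^{-1}\mathbf{A}\mathbf{C}}{q^2-q^{-2}}=0,\quad \mathbf{C}+\frac{q\mathbf{A}\mathbf{B}-q^{-1}\mathbf{B}\mathbf{A}}{q^2-q^{-2}}=0.$$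
   Context: Let $\Gamma$ be a finite connected undirected distance-regular graph (no loops or multiple edges) with vertex set $X$, distance $\partial$ and diameter $D\ge3$, which is bipartite and 2-homogeneous in the sense of Nomura (for all $1\le i\le D$, all $y,z$ with $\partial(y,z)=2$ and all $t$ with $\partial(y,t)=\partial(z,t)=i$, $|\Gamma_1(y)\cap\Gamma_1(z)\cap\Gamma_{i-1}(t)|$ depends only on $i$), and not a hypercube; $V=\mathbb{C}^X$. Let $A$ be the adjacency matrix, $E_0=|X|^{-1}J$ and $E_1,\dots,E_D$ a $Q$-polynomial ordering of the nontrivial primitive idempotents of the Bose–Mesner algebra, $A=\sum_i\theta_iE_i$. Fix a vertex $x$; $E_i^*$ is the diagonal $0/1$ matrix projecting onto vertices at distance $i$ from $x$; $A^*$ is diagonal with $(y,y)$-entry $|X|(E_1)_{xy}$, $A^*=\sum\theta_i^*E_i^*$; $T$ is the algebra generated by $A,A^*$. It is known that there is a nonzero $q\in\mathbb{C}$ with $q^4\ne1$ such that $\theta_i=\theta_i^*=\frac{q^{D-2}+q^{2-D}}{q^2-q^{-2}}(q^{D-2i}-q^{2i-D})$; fix such $q$. Set $w=w^*=0$, $v=v^*=-u=-u^*=\frac{q^{D-2}+q^{2-D}}{q^2-q^{-2}}$; fix $a,b$ with $a^2=u/v$, $b^2=u^*/v^*$; $\mathbf{A}=(A-wI)/(av)$, $\mathbf{B}=(A^*-w^*I)/(bv^* )$. For an irreducible $T$-module $W\subseteq V$: endpoint $\rho=\min\{i:E^*_iW\ne0\}$, dual endpoint $\tau=\min\{i:E_iW\ne0\}$,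 diameter $d=|\{i:E_i^*W\ne0\}|-1$. It is known that every irreducible $T$-module is thin ($\dim E_i^*W\le1$), with $\tau=\rho$ and $d=D-2\rho$. Put $a(W)=aq^{2\tau+d-D}$, $b(W)=bq^{2\rho+d-D}$. Then $(\mathbf{A}|_W,\{E_{\tau+i}|_W\}_{i=0}^d,\mathbf{B}|_W,\{E^*_{\rho+i}|_W\}_{i=0}^d)$ is a Leonard system with eigenvalues $\vartheta_i=a(W)q^{2i-d}+a(W)^{-1}q^{d-2i}$ and dual eigenvalues $\vartheta^*_i=b(W)q^{2i-d}+b(W)^{-1}q^{d-2i}$. Let $\kappa=0$ if $d=0$ and, for $d\ge1$, $\kappa=a(W)b(W)^{-1}q^{d-1}+a(W)^{-1}b(W)q^{1-d}+\phi_1/((q-q^{-1})(q^d-q^{-d}))$ with $\phi_1=(\vartheta^*_0-\vartheta^*_1)(\mathrm{trace}(E^*_\rho\mathbf{A}|_W)-\vartheta_d)$; $c(W)$ is a root of $\xi^2-\kappa\xi+1=0$. Isomorphism of irreducible modules: linear bijection commuting with $T$; $\Psi$ = set of types; for $\psi\in\Psi$, $a(\psi),b(\psi),d(\psi),c(\psi)$ are $a(W),b(W)$, the diameter, and (a fixed choice of) $c(W)$ for $W$ of type $\psi$. $V_\psi$ = span of irreducible modules of type $\psi$, $V=\bigoplus_\psi V_\psi$, $e_\psi$ = identity on $V_\psi$ and $0$ on other $V_\lambda$. Define $\mathbf{a}=\sum_\psi a(\psi)e_\psi$, $\mathbf{b}=\sum_\psi b(\psi)e_\psi$, $\mathbf{c}=\sum_\psi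 c(\psi)e_\psi$, $\Lambda=\sum_\psi q^{d(\psi)+1}e_\psi$ (invertible, with inverses $\sum_\psi a(\psi)^{-1}e_\psi$, etc.). *)

(* Defs.v *)
From HB Require Import structures.
From mathcomp Require Import all_boot all_order all_algebra all_field.
Set Implicit Arguments. Unset Strict Implicit. Unset Printing Implicit Defensive.
Import Order.TTheory GRing.Theory Num.Theory.
Local Open Scope ring_scope.

(* Vertex set X = 'I_n.+1 (so |X| = n.+1);  V = C^X.  A vector v of V is
   represented as a row vector 'rV_n.+1 and a subspace W of V as the row space
   of a square matrix W.  A matrix M acts on (column) vectors by v |-> M v,
   which on row vectors reads v |-> v *m M^T. *)

Section Setting.
Variable n : nat.
Local Notation X := 'I_n.+1.
Variable e : rel X.
Variable E : nat -> 'M[algC]_n.+1.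
Variable x : X.
Variables q a b : algC.

Fixpoint walk (k : nat) (y z : X) : bool :=
  if k is k'.+1 then [exists w, e y w && walk k' w z] else y == z.

Definition connected_graph : Prop := forall y z : X, exists k, walk k y z.
Definition simple_graph : Prop := irreflexive e /\ symmetric e.

(* path-length distance (the bound n.+1 is never reached in a connected graph) *)
Definition dist (y z : X) : nat := (\big[minn/n.+1]_(k < n.+1 | walk k y z) k)%N.
Definition diam : nat := (\max_(y : X) \max_(z : X) dist y z)%N.

Definition distance_regular : Prop :=
  forall (i j : nat) (y z y' z' : X), dist y z = dist y' z' ->
    #|[set w | (dist y w == i) && (dist z w == j)]| =
    #|[set w | (dist y' w == i) && (dist z' w == j)]|.

Definition bipartite : Prop :=
  exists f : X -> bool, forall y z, e y z -> f y != f z.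

Definition two_homogeneous : Prop :=
  forall i : nat, (1 <= i <= diam)%N ->
  forall y z t y' z' t' : X,
    dist y z = 2%N -> dist y t = i -> dist z t = i ->
    dist y' z' = 2%N -> dist y' t' = i -> dist z' t' = i ->
    #|[set w | e y w && e z w && (dist t w == i.-1)]| =
    #|[set w | e y' w && e z' w && (dist t' w == i.-1)]|.

Definition is_hypercube : Prop :=
  exists f : X -> {ffun 'I_diam -> bool}, bijective f /\
    forall y z, e y z = (#|[set k | f y k != f z k]| == 1%N).

Definition Amx : 'M[algC]_n.+1 := \matrix_(y, z) (e y z)%:R.
Definition Adist (i : nat) : 'M[algC]_n.+1 := \matrix_(y, z) (dist y z == i)%:R.
Definition BM (M : 'M[algC]_n.+1) : Prop :=
  exists c : nat -> algC, M = \sum_(i < diam.+1) c i *: Adist i.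

Definition hadpoly (p : {poly algC}) (M : 'M[algC]_n.+1) : 'M[algC]_n.+1 :=
  \sum_(k < size p) p`_k *: \matrix_(y, z) (M y z ^+ k).

(* E_0 = |X|^-1 J, E_0..E_D are the primitive idempotents of the Bose-Mesner
   algebra (D+1 nonzero pairwise orthogonal idempotents of BM summing to I,
   BM having dimension D+1), and E_0, E_1, ..., E_D is a Q-polynomial ordering:
   E_i is a polynomial of degree i in E_1 w.r.t. the Hadamard product. *)
Definition Qpoly_primitive_idempotents : Prop :=
  [/\ E 0%N = (n.+1)%:R^-1 *: const_mx 1,
      forall i, (i <= diam)%N -> BM (E i) /\ E i != 0,
      forall i j, (i <= diam)%N -> (j <= diam)%N ->
                  E i *m E j = (if i == j then E i else 0),
      \sum_(i < diam.+1) E i = 1%:M &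
      forall i, (i <= diam)%N ->
        exists p : {poly algC}, size p = i.+1 /\ E i = hadpoly p (E 1%N)].

Definition Estar (i : nat) : 'M[algC]_n.+1 := diag_mx (\row_y (dist x y == i)%:R).
Definition Astar : 'M[algC]_n.+1 := diag_mx (\row_y ((n.+1)%:R * E 1%N x y)).

Definition word (s : seq bool) : 'M[algC]_n.+1 :=
  \prod_(c <- s) (if c then Amx else Astar).
(* T = the subalgebra of Mat_X(C) generated by A and A^* *)
Definition Tmem (M : 'M[algC]_n.+1) : Prop :=
  exists l : seq (algC * seq bool), M = \sum_(p <- l) p.1 *: word p.2.

Definition is_Tmodule (W : 'M[algC]_n.+1) : Prop :=
  forall M, Tmem M -> (W *m M^T <= W)%MS.
Definition irreducible (W : 'M[algC]_n.+1) : Prop :=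
  [/\ is_Tmodule W, W != 0 &
      forall W', is_Tmodule W' -> (W' <= W)%MS -> W' = 0 \/ (W' == W)%MS].

(* E W <> 0, in row form *)
Definition nz_on (F W : 'M[algC]_n.+1) : bool := W *m F^T != 0.

Definition endpoint (W : 'M[algC]_n.+1) : nat :=
  (\big[minn/diam.+1]_(i < diam.+1 | nz_on (Estar i) W) i)%N.
Definition dual_endpoint (W : 'M[algC]_n.+1) : nat :=
  (\big[minn/diam.+1]_(i < diam.+1 | nz_on (E i) W) i)%N.
Definition mod_diam (W : 'M[algC]_n.+1) : nat :=
  (#|[set i : 'I_diam.+1 | nz_on (Estar i) W]|).-1.

(* isomorphism of T-modules: a linear bijection W -> W' commuting with T
   (the map is v |-> v *m P on row vectors) *)
Definition Tiso (W W' : 'M[algC]_n.+1) : Prop :=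
  exists P : 'M[algC]_n.+1,
    [/\ (W *m P == W')%MS, \rank (W *m P) = \rank W &
        forall M, Tmem M -> W *m (M^T *m P - P *m M^T) = 0].

(* trace of the restriction to the invariant subspace W of v |-> M v *)
Definition restr_trace (W M : 'M[algC]_n.+1) : algC :=
  \tr (row_base W *m M^T *m pinvmx (row_base W)).

Definition thetaform (i : nat) : algC :=
  (q ^ (diam%:Z - 2) + q ^ (2 - diam%:Z)) / (q ^+ 2 - q ^- 2) *
  (q ^ (diam%:Z - (2 * i)%:Z) - q ^ ((2 * i)%:Z - diam%:Z)).

Definition wpar : algC := 0.
Definition vpar : algC := (q ^ (diam%:Z - 2) + q ^ (2 - diam%:Z)) / (q ^+ 2 - q ^- 2).
Definition upar : algC := - vpar.

Definition bA : 'M[algC]_n.+1 := (a * vpar)^-1 *: (Amx - wpar%:M).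
Definition bB : 'M[algC]_n.+1 := (b * vpar)^-1 *: (Astar - wpar%:M).

Definition aW (W : 'M[algC]_n.+1) : algC :=
  a * q ^ ((2 * dual_endpoint W + mod_diam W)%:Z - diam%:Z).
Definition bW (W : 'M[algC]_n.+1) : algC :=
  b * q ^ ((2 * endpoint W + mod_diam W)%:Z - diam%:Z).
Definition vth (W : 'M[algC]_n.+1) (i : nat) : algC :=
  aW W * q ^ ((2 * i)%:Z - (mod_diam W)%:Z) + (aW W)^-1 * q ^ ((mod_diam W)%:Z - (2 * i)%:Z).
Definition vths (W : 'M[algC]_n.+1) (i : nat) : algC :=
  bW W * q ^ ((2 * i)%:Z - (mod_diam W)%:Z) + (bW W)^-1 * q ^ ((mod_diam W)%:Z - (2 * i)%:Z).

Definition phi1 (W : 'M[algC]_n.+1) : algC :=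
  (vths W 0 - vths W 1) *
  (restr_trace W (Estar (endpoint W) *m bA) - vth W (mod_diam W)).

Definition kappa (W : 'M[algC]_n.+1) : algC :=
  if mod_diam W == 0%N then 0 else
  aW W / bW W * q ^ ((mod_diam W)%:Z - 1) + bW W / aW W * q ^ (1 - (mod_diam W)%:Z)
  + phi1 W / ((q - q^-1) * (q ^+ mod_diam W - q ^- mod_diam W)).

(* facts stated as known in the context: every irreducible T-module is thin,
   with tau = rho and d = D - 2 rho *)
Definition thin_known_facts : Prop :=
  forall W, irreducible W ->
    [/\ forall i, (\rank (W *m (Estar i)^T) <= 1)%N,
        dual_endpoint W = endpoint W &
        mod_diam W = (diam - 2 * endpoint W)%N].

(* c : a fixed choice, on each isomorphism type, of a root of xi^2 - kappa xi + 1 *)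
Definition c_choice (c : 'M[algC]_n.+1 -> algC) : Prop :=
  (forall W, irreducible W -> c W ^+ 2 - kappa W * c W + 1 = 0) /\
  (forall W W', irreducible W -> irreducible W' -> Tiso W W' -> c W = c W').

(* Mx = sum_psi f(psi) e_psi : Mx acts on every irreducible T-module W
   (hence on V_psi for the type psi of W) as the scalar f(W) *)
Definition scalar_on_types (Mx : 'M[algC]_n.+1) (f : 'M[algC]_n.+1 -> algC) : Prop :=
  forall W, irreducible W -> W *m Mx^T = f W *: W.

End Setting.

(* Main.v *)
Require Import Defs.
From HB Require Import structures.
From mathcomp Require Import all_boot all_order all_algebra all_field.
From mathcomp Require Import zify ring.
From Stdlib Require Import Classical.
Set Implicit Arguments. Unset Strict Implicit. Unset Printing Implicit Defensive.
Import Order.TTheory GRing.Theory Num.Theory Num.Def.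
Local Open Scope ring_scope.

Section Talg.
Variable n : nat.
Variable e : rel 'I_n.+1.
Variable E : nat -> 'M[algC]_n.+1.
Variable x : 'I_n.+1.
Local Notation T := (Tmem e E x).

Lemma T0 : T 0.
Proof. by exists [::]; rewrite big_nil. Qed.

Lemma TD M N : T M -> T N -> T (M + N).
Proof. by move=> [l1 ->] [l2 ->]; exists (l1 ++ l2); rewrite big_cat. Qed.

Lemma TZ c M : T M -> T (c *: M).
Proof.
move=> [l ->]; exists [seq (c * p.1, p.2) | p <- l].
by rewrite big_map scaler_sumr; apply: eq_bigr => p _; rewrite scalerA.
Qed.

Lemma Tword s : T (word e E x s).
Proof. by exists [:: (1, s)]; rewrite big_seq1 scale1r. Qed.

Lemma TM M N : T M -> T N -> T (M *m N).
Proof.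
move=> [l1 ->] [l2 ->]; elim: l1 => [|p l1 IH].
  by rewrite big_nil mul0mx; exact: T0.
rewrite big_cons mulmxDl; apply: TD => //.
rewrite -scalemxAl mulmx_sumr; apply: TZ.
clear IH; elim: l2 => [|r l2 IH2]; first by rewrite big_nil; exact: T0.
rewrite big_cons; apply: TD => //.
rewrite -scalemxAr; apply: TZ.
by rewrite /word mulmxE -big_cat; apply: Tword.
Qed.

Lemma T1 : T 1%:M.
Proof. by rewrite -(big_nil _ _ _ _ : word e E x [::] = 1%:M) //; exact: Tword. Qed.

Lemma TA : T (Amx e).
Proof. by have := Tword [:: true]; rewrite /word big_seq1. Qed.

Lemma TAs : T (Astar E x).
Proof. by have := Tword [:: false]; rewrite /word big_seq1. Qed.

Lemma TN M : T M -> T (- M).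
Proof. by move=> h; rewrite -scaleN1r; apply: TZ. Qed.

Lemma TB M N : T M -> T N -> T (M - N).
Proof. by move=> h1 h2; apply: TD => //; apply: TN. Qed.

Lemma Tsum I (r : seq I) (P : pred I) (F : I -> 'M_n.+1) :
  (forall i, P i -> T (F i)) -> T (\sum_(i <- r | P i) F i).
Proof.
move=> h; elim: r => [|i r IH]; first by rewrite big_nil; exact: T0.
by rewrite big_cons; case: ifP => // Pi; apply: TD => //; apply: h.
Qed.

Lemma Tprod I (r : seq I) (P : pred I) (F : I -> 'M_n.+1) :
  (forall i, P i -> T (F i)) -> T (\prod_(i <- r | P i) F i).
Proof.
move=> h; elim: r => [|i r IH]; first by rewrite big_nil; exact: T1.
by rewrite big_cons; case: ifP => // Pi; apply: TM => //; apply: h.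
Qed.

Lemma Tscalar c : T c%:M.
Proof. by rewrite -scalemx1; apply: TZ; apply: T1. Qed.

Lemma Tmem_ind (P : 'M[algC]_n.+1 -> Prop) :
  P 0 -> (forall M N, P M -> P N -> P (M + N)) ->
  (forall c M, P M -> P (c *: M)) -> (forall s, P (word e E x s)) ->
  forall M, T M -> P M.
Proof.
move=> P0 PD PZ Pw M [l ->]; elim: l => [|p l IH]; first by rewrite big_nil.
by rewrite big_cons; apply: PD => //; apply: PZ.
Qed.

End Talg.

Section Talg2.
Variable n : nat.
Variable e : rel 'I_n.+1.
Variable E : nat -> 'M[algC]_n.+1.
Variable x : 'I_n.+1.
Local Notation T := (Tmem e E x).

Lemma word_cons c s : word e E x (c :: s) =
  (if c then Amx e else Astar E x) *m word e E x s.
Proof. by rewrite /word big_cons mulmxE. Qed.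

Lemma Amx_tr : symmetric e -> (Amx e)^T = Amx e.
Proof. by move=> se; apply/matrixP=> i j; rewrite !mxE se. Qed.

Lemma Astar_tr : (Astar E x)^T = Astar E x.
Proof. by rewrite /Astar tr_diag_mx. Qed.

Lemma Ttr M : symmetric e -> T M -> T M^T.
Proof.
move=> se; move: M; apply: (@Tmem_ind _ _ _ _ (fun M => T M^T)).
- by rewrite trmx0; apply: T0.
- by move=> A B hA hB; rewrite linearD /=; apply: TD.
- by move=> c A hA; rewrite linearZ /=; apply: TZ.
elim=> [|c s IH]; first by rewrite /word big_nil trmx1; apply: T1.
rewrite word_cons trmx_mul; apply: TM => //.
by case: c; [rewrite Amx_tr //; apply: TA | rewrite Astar_tr; apply: TAs].
Qed.

Lemma Tconj M : T (map_mx conjC (Astar E x)) -> T M -> T (map_mx conjC M).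
Proof.
move=> hc; move: M; apply: (@Tmem_ind _ _ _ _ (fun M => T (map_mx conjC M))).
- by rewrite map_mx0; apply: T0.
- by move=> A B hA hB; rewrite map_mxD; apply: TD.
- by move=> c A hA; rewrite map_mxZ; apply: TZ.
elim=> [|c s IH]; first by rewrite /word big_nil map_mx1; apply: T1.
rewrite word_cons map_mxM; apply: TM => //.
case: c => //.
have -> : map_mx conjC (Amx e) = Amx e.
  by apply/matrixP=> i j; rewrite !mxE rmorph_nat.
exact: TA.
Qed.

End Talg2.

Lemma bmin_le_seq (I : eqType) (r : seq I) (P : pred I) (F : I -> nat) m i :
  i \in r -> P i -> (\big[minn/m]_(j <- r | P j) F j <= F i)%N.
Proof.
elim: r => [|j r IH] //; rewrite inE big_cons => /orP[/eqP <- | ir] Pi.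
  by rewrite Pi geq_minl.
case: ifP => _; last exact: IH.
by rewrite (leq_trans (geq_minr _ _)) // IH.
Qed.

Lemma bmin_le (N : nat) (P : pred 'I_N) (F : 'I_N -> nat) m i :
  P i -> (\big[minn/m]_(j < N | P j) F j <= F i)%N.
Proof. by move=> Pi; apply: bmin_le_seq => //; rewrite mem_index_enum. Qed.

Lemma bmin_cases (N : nat) (P : pred 'I_N) (F : 'I_N -> nat) m :
  let v := \big[minn/m]_(j < N | P j) F j in
  v = m \/ exists i, P i /\ v = F i.
Proof.
apply: (big_rec (fun v => v = m \/ exists i, P i /\ v = F i)); first by left.
move=> i y Pi hy; rewrite /minn; case: ltnP => h.
  by right; exists i.
by [].
Qed.

Lemma bmin_id_cases (N : nat) (P : pred 'I_N) m :
  let v := \big[minn/m]_(j < N | P j) (j : nat) in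
  v = m \/ exists i : 'I_N, P i /\ v = i.
Proof. exact: (bmin_cases P (fun j : 'I_N => (j : nat)) m). Qed.

Section Graph.
Variable n : nat.
Variable e : rel 'I_n.+1.
Variable x : 'I_n.+1.

Lemma walk_path k y z : walk e k y z ->
  exists p, [/\ size p = k, path e y p & last y p = z].
Proof.
elim: k y => [|k IH] y /=; first by move/eqP->; exists [::].
case/existsP=> w /andP[eyw /IH [p [sp pp lp]]].
by exists (w :: p); rewrite /= eyw sp pp lp.
Qed.

Lemma path_walk p y : path e y p -> walk e (size p) y (last y p).
Proof.
elim: p y => [|w p IH] y /=; first by [].
case/andP=> eyw pp; apply/existsP; exists w; rewrite eyw; exact: IH.
Qed.

Lemma walk_short k y z : walk e k y z -> exists2 j, (j < n.+1)%N & walk e j y z.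
Proof.
case/walk_path=> p [_ pp <-]; case: (shortenP pp) => p' pp' up' _.
exists (size p'); last exact: path_walk.
have := max_card (mem (y :: p')); rewrite (card_uniqP up') card_ord //=.
Qed.

Lemma dist_min k y z : walk e k y z -> (k < n.+1)%N -> (dist e y z <= k)%N.
Proof.
move=> w lt; rewrite /dist.
exact: (@bmin_le n.+1 (fun j : 'I_n.+1 => walk e j y z) (fun j => nat_of_ord j) n.+1 (Ordinal lt) w).
Qed.

Lemma dist_self y : dist e y y = 0%N.
Proof. by apply/eqP; rewrite -leqn0; apply: (@dist_min 0) => /=. Qed.

Lemma dist_lt y z : connected_graph e -> (dist e y z < n.+1)%N.
Proof.
move=> /(_ y z) [k /walk_short [j lj wj]].
by apply: leq_ltn_trans (dist_min wj lj) lj.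
Qed.

Lemma dist_walk y z : (dist e y z < n.+1)%N -> walk e (dist e y z) y z.
Proof.
rewrite /dist; case: (bmin_id_cases (fun j : 'I_n.+1 => walk e j y z) n.+1) => [-> | [i [wi ->]]].
  by rewrite ltnn.
by [].
Qed.

Lemma dist_le_diam y z : (dist e y z <= diam e)%N.
Proof.
rewrite /diam.
have h1 := @leq_bigmax _ (fun y0 : 'I_n.+1 => (\max_(z0 : 'I_n.+1) dist e y0 z0)%N) y.
have h2 := @leq_bigmax _ (fun z0 : 'I_n.+1 => dist e y z0) z.
exact: leq_trans h2 h1.
Qed.

Lemma walk_parity (f : 'I_n.+1 -> bool) : (forall y z, e y z -> f y != f z) ->
  forall k y z, walk e k y z -> f z = f y (+) odd k.
Proof.
move=> hf; elim=> [|k IH] y z /=; first by move/eqP->; rewrite addbF.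
case/existsP=> w /andP[eyw /IH ->].
have := hf _ _ eyw; case: (f y); case: (f w) => //= _; by case: (odd k).
Qed.

Lemma bip_dist y z : connected_graph e -> bipartite e -> e y z ->
  dist e x y != dist e x z.
Proof.
move=> cg [f hf] eyz; apply/eqP=> hd.
have wy := dist_walk (dist_lt x y cg); have wz := dist_walk (dist_lt x z cg).
have := hf _ _ eyz; rewrite (walk_parity hf wy) (walk_parity hf wz) hd.
by rewrite eqxx.
Qed.

Lemma Estar_sum : \sum_(i < (diam e).+1) Estar e x i = 1%:M.
Proof.
apply/matrixP=> y z; rewrite summxE !mxE.
have hy : (dist e x y < (diam e).+1)%N by rewrite ltnS dist_le_diam.
rewrite (bigD1 (Ordinal hy)) //= big1 ?addr0.
  by rewrite !mxE eqxx.
move=> i /= hi; rewrite !mxE.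
have -> : (dist e x y == i) = false.
  by apply/negbTE; apply: contra hi => /eqP h; apply/eqP; apply: val_inj; rewrite /= h.
by rewrite mul0rn.
Qed.

Lemma Estar_entry i y z : Estar e x i y z = ((dist e x y == i) && (y == z))%:R.
Proof. by rewrite !mxE; case: (y == z); rewrite ?mulr1n ?mulr0n ?andbT ?andbF. Qed.

Lemma Estar_mul i j : Estar e x i *m Estar e x j = if i == j then Estar e x i else 0.
Proof.
rewrite /Estar mul_diag_mx; apply/matrixP=> y z; rewrite !mxE.
case: (eqVneq i j) => [<- | ij].
  by rewrite !mxE; case: (dist e x y == i); rewrite ?mul1r ?mul0r ?mul0rn.
rewrite mxE; case: (eqVneq (dist e x y) i) => [hi | ]; last by rewrite mul0r.
by rewrite hi (negbTE ij) mul0rn mulr0.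
Qed.

Lemma Estar_tr i : (Estar e x i)^T = Estar e x i.
Proof. by rewrite /Estar tr_diag_mx. Qed.

Lemma EAE i : connected_graph e -> bipartite e ->
  Estar e x i *m Amx e *m Estar e x i = 0.
Proof.
move=> cg bg; rewrite /Estar mul_diag_mx mul_mx_diag; apply/matrixP=> y z; rewrite !mxE.
case: (eqVneq (dist e x y) i) => [hy|]; last by rewrite !mul0r.
case: (eqVneq (dist e x z) i) => [hz|]; last by rewrite mulr0.
case eyz: (e y z); last by rewrite mulr0 mul0r.
by have := bip_dist cg bg eyz; rewrite hy hz eqxx.
Qed.
End Graph.

Section Eig.
Variable n : nat.
Variable e : rel 'I_n.+1.
Variable E : nat -> 'M[algC]_n.+1.
Hypothesis hQ : Qpoly_primitive_idempotents e E.
Local Notation D := (diam e).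

Lemma E_nz i : (i <= D)%N -> E i != 0.
Proof. by case: hQ => _ h _ _ _ /h []. Qed.

Lemma E_orth i j : (i <= D)%N -> (j <= D)%N -> E i *m E j = (if i == j then E i else 0).
Proof. by case: hQ => _ _ h _ _; apply: h. Qed.

Lemma E_indep (v : 'rV_D.+1) : \sum_(i < D.+1) v 0 i *: E i = 0 -> v = 0.
Proof.
move=> hv; apply/rowP=> k; rewrite mxE.
have : (\sum_(i < D.+1) v 0 i *: E i) *m E k = 0 by rewrite hv mul0mx.
rewrite mulmx_suml (bigD1 k) // big1.
  rewrite Monoid.mulm1 -scalemxAl E_orth ?eqxx; last 2 first.
  - by rewrite -ltnS.
  - by rewrite -ltnS.
  move/eqP; rewrite scaler_eq0 (negbTE (E_nz _)) ?orbF; first by move/eqP.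
  by rewrite -ltnS.
move=> i ik; rewrite -scalemxAl E_orth; last 2 first.
- by rewrite -ltnS.
- by rewrite -ltnS.
by rewrite (_ : (i == k :> nat) = false) ?scaler0 //; apply/negbTE.
Qed.
Lemma no_kernel (P : 'M[algC]_D.+1)
  (hP : forall (i : 'I_D.+1) y z, E i y z = \sum_(l < D.+1) P i l * Adist e l y z)
  (u : 'cV_D.+1) : u != 0 -> P *m u = 0 -> False.
Proof.
move=> u0 Pu.
have : \det P == 0.
  rewrite -det_tr; apply/det0P; exists u^T; first by rewrite trmx_eq0.
  by rewrite -trmx_mul Pu trmx0.
case/det0P=> v v0 vP; move/negP: v0; apply; apply/eqP; apply: E_indep.
apply/matrixP=> y z; rewrite summxE mxE.
under eq_bigr => i _ do rewrite mxE hP mulr_sumr.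
rewrite exchange_big; apply: big1 => l _.
have : (v *m P) 0 l = 0 by rewrite vP mxE.
rewrite mxE => h.
rewrite (eq_bigr (fun i => (v 0 i * P i l) * Adist e l y z)); last by move=> i _; rewrite mulrA.
by rewrite -mulr_suml h mul0r.
Qed.
Lemma Adist_entry l y z : Adist e l y z = (dist e y z == l)%:R.
Proof. by rewrite mxE. Qed.

Lemma sum_Adist (f : nat -> algC) y z :
  \sum_(l < D.+1) f l * Adist e l y z = f (dist e y z).
Proof.
have hy : (dist e y z < D.+1)%N by rewrite ltnS dist_le_diam.
rewrite (bigD1 (Ordinal hy)) // big1 ?Monoid.mulm1.
  by rewrite Adist_entry eqxx mulr1.
move=> i hi; rewrite Adist_entry.
have -> : (dist e y z == i) = false.
  by apply/negbTE; apply: contra hi => /eqP h; apply/eqP; apply: val_inj; rewrite /= h.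
by rewrite mulr0.
Qed.

Lemma E1_entry : (1 <= D)%N -> exists c : nat -> algC, forall y z, E 1 y z = c (dist e y z).
Proof.
move=> D1; case: hQ => _ hBM _ _ _; case: (hBM 1%N D1) => [[c hc] _].
exists c => y z; rewrite hc summxE -(sum_Adist c y z); apply: eq_bigr => l _.
by rewrite mxE.
Qed.

Lemma Ei_entry c i : (forall y z, E 1 y z = c (dist e y z)) -> (i <= D)%N ->
  exists p : {poly algC}, forall y z, E i y z = p.[c (dist e y z)].
Proof.
move=> hc iD; case: hQ => _ _ _ _ /(_ i iD) [p [_ ->]].
exists p => y z; rewrite /hadpoly summxE horner_coef; apply: eq_bigr => k _.
by rewrite !mxE hc.
Qed.

Section CP.
Variable c : nat -> algC.
Hypothesis D1 : (1 <= D)%N.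
Hypothesis hc : forall y z, E 1 y z = c (dist e y z).

Lemma pp_exists : exists pp : 'I_D.+1 -> {poly algC},
  forall (i : 'I_D.+1) y z, E i y z = (pp i).[c (dist e y z)].
Proof.
have hex : forall i : 'I_D.+1, exists p : {poly algC},
    [forall y, forall z, E i y z == p.[c (dist e y z)]].
  move=> i; have [p hp] := Ei_entry hc (ltn_ord i).
  by exists p; apply/forallP=> y; apply/forallP=> z; rewrite hp.
exists (fun i => xchoose (hex i)) => i y z.
by have := xchooseP (hex i) => /forallP/(_ y)/forallP/(_ z)/eqP.
Qed.

Lemma dist_exists j : (j <= D)%N -> exists y z, dist e y z = j.
Proof.
move=> jD; apply: NNPP => hne.
have hd : forall y z, dist e y z != j.
  by move=> y z; apply/eqP => h; apply: hne; exists y, z.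
have [pp hpp] := pp_exists.
have jD' : (j < D.+1)%N by [].
pose P := \matrix_(i < D.+1, l < D.+1) (if l == Ordinal jD' then 0 else (pp i).[c l]).
apply: (@no_kernel P _ (delta_mx (Ordinal jD') 0)).
- move=> i y z; rewrite hpp.
  rewrite (eq_bigr (fun l : 'I_D.+1 => (if (l : nat) == j then 0 else (pp i).[c l]) * Adist e l y z)).
    by rewrite (sum_Adist (fun l => if l == j then 0 else (pp i).[c l])) (negbTE (hd y z)).
  by move=> l _; rewrite mxE -val_eqE.
- by apply/eqP=> /matrixP/(_ (Ordinal jD') 0); rewrite !mxE !eqxx /= => /eqP; rewrite oner_eq0.
- apply/matrixP=> i k; rewrite !mxE (bigD1 (Ordinal jD')) // big1 ?Monoid.mulm1.
    by rewrite !mxE eqxx; apply: mul0r.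
  by move=> l hl; rewrite !mxE (negbTE hl) mulr0.
Qed.
Lemma c_inj j k : (j <= D)%N -> (k <= D)%N -> c j = c k -> j = k.
Proof.
move=> jD kD cjk; apply: NNPP => jk.
have [pp hpp] := pp_exists.
have jD' : (j < D.+1)%N by [].
have kD' : (k < D.+1)%N by [].
pose P := \matrix_(i < D.+1, l < D.+1) (pp i).[c l].
apply: (@no_kernel P _ (delta_mx (Ordinal jD') 0 - delta_mx (Ordinal kD') 0)).
- move=> i y z; rewrite hpp.
  rewrite (eq_bigr (fun l : 'I_D.+1 => (pp i).[c l] * Adist e l y z)).
    by rewrite (sum_Adist (fun l => (pp i).[c l])).
  by move=> l _; rewrite mxE.
- apply/eqP=> /matrixP/(_ (Ordinal jD') 0); rewrite !mxE !eqxx /=.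
  have -> : (Ordinal jD' == Ordinal kD') = false.
    by apply/negbTE; apply/eqP => -[].
  by rewrite subr0 => /eqP; rewrite oner_eq0.
- rewrite mulmxBr; apply/eqP; rewrite subr_eq0; apply/eqP.
  apply/matrixP=> i l; rewrite !mxE (bigD1 (Ordinal jD')) // big1 ?Monoid.mulm1; last first.
    by move=> m hm; rewrite !mxE (negbTE hm) mulr0.
  rewrite (bigD1 (Ordinal kD')) // big1 ?Monoid.mulm1; last first.
    by move=> m hm; rewrite !mxE (negbTE hm) mulr0.
  by rewrite !mxE !eqxx /= cjk.
Qed.
End CP.
End Eig.

Lemma sum_ind (D : nat) (f : nat -> algC) d : (d <= D)%N ->
  \sum_(i < D.+1) f i * (d == i)%:R = f d.
Proof.
move=> dD; have hd : (d < D.+1)%N by [].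
rewrite (bigD1 (Ordinal hd)) // big1 ?Monoid.mulm1 /=; first by rewrite eqxx mulr1.
move=> i hi; have -> : (d == i) = false.
  by apply/negbTE; apply: contra hi => /eqP h; apply/eqP; apply: val_inj; rewrite /= h.
by rewrite mulr0.
Qed.

Section Theta.
Variable n : nat.
Variable e : rel 'I_n.+1.
Variable E : nat -> 'M[algC]_n.+1.
Variable x : 'I_n.+1.
Variable thetas : nat -> algC.
Hypothesis hQ : Qpoly_primitive_idempotents e E.
Hypothesis D1 : (1 <= diam e)%N.
Hypothesis hdr : distance_regular e.
Hypothesis hAs : Astar E x = \sum_(i < (diam e).+1) thetas i *: Estar e x i.
Local Notation D := (diam e).

Lemma Astar_diag : Astar E x = diag_mx (\row_y thetas (dist e x y)).
Proof.
rewrite hAs; apply/matrixP=> y z; rewrite summxE !mxE.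
under eq_bigr => i _ do rewrite !mxE mulrnAr.
case: (y == z); last by rewrite mulr0n big1 // => i _; rewrite mulr0n.
rewrite mulr1n -(sum_ind (fun i => thetas i) (dist_le_diam e x y)).
by apply: eq_bigr => i _; rewrite mulr1n.
Qed.

Lemma dist_from_x j : (j <= D)%N -> exists y, dist e x y = j.
Proof.
move=> jD; have [c hc] := E1_entry hQ D1.
have [y [z hyz]] := dist_exists hQ hc jD.
have := @hdr j j y y x x; rewrite !dist_self => /(_ erefl) hcard.
have : (0 < #|[set w | (dist e x w == j) && (dist e x w == j)]|)%N.
  by rewrite -hcard; apply/card_gt0P; exists z; rewrite inE hyz eqxx.
by case/card_gt0P=> w; rewrite inE => /andP[/eqP h _]; exists w.
Qed.

Lemma thetas_c c : (forall y z, E 1 y z = c (dist e y z)) ->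
  forall j, (j <= D)%N -> thetas j = (n.+1)%:R * c j.
Proof.
move=> hc j jD; have [y hy] := dist_from_x jD.
have := congr1 (fun M : 'M[algC]_n.+1 => M y y) Astar_diag.
by rewrite /Astar !mxE eqxx !mulr1n hc hy => <-.
Qed.

Lemma thetas_inj j k : (j <= D)%N -> (k <= D)%N -> thetas j = thetas k -> j = k.
Proof.
move=> jD kD; have [c hc] := E1_entry hQ D1.
rewrite !(thetas_c hc) // => /mulfI h; apply: (c_inj hQ hc jD kD); apply: h.
by rewrite pnatr_eq0.
Qed.

End Theta.

Lemma prod_diag (m : nat) (I : Type) (r : seq I) (P : pred I) (d : I -> 'rV[algC]_m.+1) :
  \prod_(i <- r | P i) diag_mx (d i) = diag_mx (\row_y \prod_(i <- r | P i) d i 0 y).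
Proof.
elim: r => [|i r IH].
  rewrite big_nil; change (1%:M = diag_mx (\row_y \prod_(i <- [::] | P i) d i 0 y)).
  by apply/matrixP=> y z; rewrite !mxE; rewrite big_nil.
rewrite big_cons; case: ifP => Pi; last first.
  by rewrite IH; apply/matrixP=> y z; rewrite !mxE big_cons Pi.
rewrite IH -mulmxE mul_diag_mx; apply/matrixP=> y z; rewrite !mxE big_cons Pi.
by rewrite mulrnAr.
Qed.

Section EstarT.
Variable n : nat.
Variable e : rel 'I_n.+1.
Variable E : nat -> 'M[algC]_n.+1.
Variable x : 'I_n.+1.
Variable thetas : nat -> algC.
Hypothesis hQ : Qpoly_primitive_idempotents e E.
Hypothesis D1 : (1 <= diam e)%N.
Hypothesis hdr : distance_regular e.
Hypothesis hAs : Astar E x = \sum_(i < (diam e).+1) thetas i *: Estar e x i.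
Local Notation D := (diam e).
Local Notation T := (Tmem e E x).

Lemma Estar_T j : T (Estar e x j).
Proof.
case: (leqP j D) => jD; last first.
  have -> : Estar e x j = 0.
    apply/matrixP=> y z; rewrite !mxE.
    have -> : (dist e x y == j) = false.
      by apply/negbTE; rewrite neq_ltn (leq_ltn_trans (dist_le_diam e x y) jD).
    by rewrite mul0rn.
  exact: T0.
pose pi := \prod_(i < D.+1 | (i : nat) != j) (thetas j - thetas i).
have pi0 : pi != 0.
  rewrite prodf_seq_neq0; apply/allP=> i _; apply/implyP=> ij.
  rewrite subr_eq0; apply/eqP=> h; move/eqP: ij; apply.
  by symmetry; apply: (thetas_inj hQ D1 hdr hAs) => //; rewrite -ltnS.
have hQT : T (\prod_(i < D.+1 | (i : nat) != j) (Astar E x - (thetas i)%:M)).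
  apply: Tprod => i _; apply: TB; [exact: TAs | exact: Tscalar].
have -> : Estar e x j = pi^-1 *: \prod_(i < D.+1 | (i : nat) != j) (Astar E x - (thetas i)%:M).
  rewrite (eq_bigr (fun i : 'I_D.+1 => diag_mx (\row_y (thetas (dist e x y) - thetas i)))); last first.
    move=> i _; rewrite (Astar_diag hAs); apply/matrixP=> y z; rewrite !mxE.
    by case: (y == z); rewrite ?mulr1n ?mulr0n ?subr0.
  rewrite prod_diag; apply/matrixP=> y z; rewrite !mxE.
  case: (y == z); last by rewrite !mulr0n mulr0.
  under eq_bigr => i _ do rewrite mxE.
  rewrite !mulr1n; case: (eqVneq (dist e x y) j) => [-> | hy].
    by rewrite mulVf.
  symmetry; apply/eqP; rewrite mulf_eq0 invr_eq0 (negbTE pi0) /=.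
  have hy' : (dist e x y < D.+1)%N by rewrite ltnS dist_le_diam.
  by rewrite (bigD1 (Ordinal hy')) //= subrr mul0r.
exact: TZ.
Qed.

Lemma Tconj_As : T (map_mx conjC (Astar E x)).
Proof.
rewrite hAs raddf_sum /=; apply: Tsum => i _; rewrite map_mxZ; apply: TZ.
have -> : map_mx conjC (Estar e x i) = Estar e x i.
  by apply/matrixP=> y z; rewrite !mxE rmorphMn rmorph_nat.
exact: Estar_T.
Qed.

End EstarT.

Lemma selfadj0 (m k : nat) (Z : 'M[algC]_(m, k)) : Z *m (map_mx conjC Z)^T = 0 -> Z = 0.
Proof.
move=> h; apply/matrixP=> i j; rewrite mxE.
have := congr1 (fun M : 'M_m => M i i) h; rewrite !mxE => hs.
have hnn : forall l, predT l -> 0 <= Z i l * (map_mx conjC Z)^T l i.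
  by move=> l _; rewrite !mxE mul_conjC_ge0.
have := @psumr_eq0P _ _ predT (fun l => Z i l * (map_mx conjC Z)^T l i) hnn hs j isT.
by rewrite !mxE => /eqP; rewrite mul_conjC_eq0 => /eqP.
Qed.

Section CR.
Variable n : nat.
Variable e : rel 'I_n.+1.
Variable E : nat -> 'M[algC]_n.+1.
Variable x : 'I_n.+1.
Local Notation T := (Tmem e E x).
Hypothesis htr : forall M, T M -> T M^T.
Hypothesis hcj : forall M, T M -> T (map_mx conjC M).

Definition perp (W : 'M[algC]_n.+1) : 'M[algC]_n.+1 := kermx (map_mx conjC W)^T.

Lemma perp_cap W : (W :&: perp W)%MS = 0.
Proof.
apply: selfadj0; set Z := (W :&: perp W)%MS.
have /sub_kermxP hZ : (Z <= perp W)%MS by apply: capmxSr.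
have /submxP [X hX] : (Z <= W)%MS by apply: capmxSl.
by rewrite {2}hX map_mxM trmx_mul mulmxA hZ mul0mx.
Qed.

Lemma perp_full W : (1%:M <= W + perp W)%MS.
Proof.
rewrite sub1mx /row_full; apply/eqP.
have := mxrank_sum_cap W (perp W); rewrite perp_cap mxrank0 addn0 => ->.
rewrite /perp mxrank_ker mxrank_tr mxrank_map subnKC //.
exact: rank_leq_row.
Qed.

Lemma perp_module W : is_Tmodule e E x W -> is_Tmodule e E x (perp W).
Proof.
move=> hW M hM; apply/sub_kermxP.
have hN : T ((map_mx conjC M)^T) by apply: htr; apply: hcj.
have /submxP [Y hY] := hW _ hN.
have hcc : map_mx conjC (map_mx conjC M) = M.
  by apply/matrixP=> i j; rewrite !mxE /= conjCK.
have h : map_mx conjC W *m M = map_mx conjC Y *m map_mx conjC W.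
  by rewrite -map_mxM -hY trmxK map_mxM hcc.
rewrite -mulmxA -trmx_mul h trmx_mul mulmxA.
by have /sub_kermxP -> : (perp W <= perp W)%MS by []; rewrite mul0mx.
Qed.

Lemma cap_module A B : is_Tmodule e E x A -> is_Tmodule e E x B ->
  is_Tmodule e E x (A :&: B)%MS.
Proof.
move=> hA hB M hM; rewrite sub_capmx; apply/andP; split.
  by apply: submx_trans (hA M hM); apply: submxMr; apply: capmxSl.
by apply: submx_trans (hB M hM); apply: submxMr; apply: capmxSr.
Qed.

Lemma exists_irr k : forall U : 'M[algC]_n.+1, (\rank U <= k)%N -> is_Tmodule e E x U ->
  U != 0 -> exists W, irreducible e E x W /\ (W <= U)%MS.
Proof.
elim: k => [|k IH] U rU mU U0.
  by move: rU; rewrite leqn0 mxrank_eq0 (negbTE U0).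
case: (classic (irreducible e E x U)) => hirr; first by exists U.
have [W' [mW' sW' hW'']] : exists W', [/\ is_Tmodule e E x W', (W' <= U)%MS &
    ~ (W' = 0 \/ (W' == U)%MS)].
  apply: NNPP => h; apply: hirr; split => // W' m1 s1; apply: NNPP => hc.
  by apply: h; exists W'; split.
have [W0 nW] : W' != 0 /\ ~~ (W' == U)%MS.
  split; apply/negP => h; apply: hW''; [left; exact/eqP | right; exact: h].
have rW : (\rank W' <= k)%N.
  rewrite -ltnS; apply: leq_trans rU.
  by rewrite (ltn_leqif (mxrank_leqif_eq sW')) nW.
have [W [iW sW]] := IH W' rW mW' W0.
by exists W; split => //; apply: submx_trans sW sW'.
Qed.

Lemma kill (N : 'M[algC]_n.+1)
  (hN : forall W, irreducible e E x W -> W *m N^T = 0) :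
  forall k (U : 'M[algC]_n.+1), (\rank U <= k)%N -> is_Tmodule e E x U -> U *m N^T = 0.
Proof.
elim=> [|k IH] U rU mU.
  by move: rU; rewrite leqn0 mxrank_eq0 => /eqP ->; rewrite mul0mx.
case: (eqVneq U 0) => [-> | U0]; first by rewrite mul0mx.
have [W [iW WU]] := exists_irr (leqnn _) mU U0.
have hWN := hN _ iW; case: iW => mW W0 _.
pose U' := (perp W :&: U)%MS.
have mU' : is_Tmodule e E x U' by apply: cap_module => //; apply: perp_module.
have sU : (U <= W + U')%MS.
  rewrite /U' (matrix_modl (perp W) WU) sub_capmx submx_refl andbT.
  by apply: submx_trans (perp_full W); apply: submx1.
have rU' : (\rank U' <= k)%N.
  rewrite -ltnS; apply: leq_trans rU.
  rewrite (ltn_leqif (mxrank_leqif_sup (capmxSr _ _))); apply/negP => hUU'.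
  have hW0 : (W <= W :&: perp W)%MS.
    rewrite sub_capmx submx_refl /=.
    by apply: submx_trans (submx_trans WU hUU') _; apply: capmxSl.
  by move: hW0; rewrite perp_cap submx0 (negbTE W0).
case/sub_addsmxP: sU => [[u1 u2] /= ->].
by rewrite mulmxDl -!mulmxA (IH _ rU' mU') hWN !mulmx0 addr0.
Qed.
Lemma kill_all (N : 'M[algC]_n.+1)
  (hN : forall W, irreducible e E x W -> W *m N^T = 0) : N = 0.
Proof.
have := @kill N hN n.+1 1%:M (rank_leq_row _) (fun M _ => submx1 _).
by rewrite mul1mx => /eqP; rewrite trmx_eq0 => /eqP.
Qed.
End CR.

Section Trace.
Variable N : nat.
Variable W : 'M[algC]_N.
Let B := row_base W.
Let X (M : 'M[algC]_N) := B *m M^T *m pinvmx B.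

Lemma XB M : (W *m M^T <= W)%MS -> X M *m B = B *m M^T.
Proof.
move=> hM; rewrite /X mulmxKpV //.
rewrite (eq_row_base W); apply: submx_trans hM; apply: submxMr.
by rewrite (eq_row_base W).
Qed.

Lemma XM M1 M2 : (W *m M2^T <= W)%MS -> X (M1 *m M2) = X M2 *m X M1.
Proof.
move=> h2; rewrite {1}/X trmx_mul (mulmxA B) -(XB h2) /X !mulmxA.
by []. Qed.

Lemma restr_trace0 P M : (W *m P^T <= W)%MS -> (W *m M^T <= W)%MS ->
  P *m P = P -> P *m M *m P = 0 -> \tr (B *m (P *m M)^T *m pinvmx B) = 0.
Proof.
move=> hP hM hPP hPMP.
have -> : B *m (P *m M)^T *m pinvmx B = X (P *m M) by [].
have hXP : X P = X P *m X P by rewrite -{1}hPP XM.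
rewrite XM // hXP mulmxA mxtrace_mulC mulmxA.
rewrite -XM // -XM //; last first.
  by rewrite trmx_mul mulmxA; apply: submx_trans hM; apply: submxMr.
by rewrite mulmxA hPMP /X trmx0 mulmx0 mul0mx mxtrace0.
Qed.
End Trace.

Lemma qz (q : algC) m k : q != 0 -> q ^ (m%:Z - k%:Z) = q ^+ m / q ^+ k.
Proof. by move=> q0; rewrite expfzDr // -exprnN. Qed.

Section Params.
Variable n : nat.
Variable e : rel 'I_n.+1.
Variable q : algC.
Hypothesis q0 : q != 0.
Local Notation D := (diam e).

Lemma thetaformE i : thetaform e q i =
  vpar e q * (q ^+ D / q ^+ (2 * i) - q ^+ (2 * i) / q ^+ D).
Proof. by rewrite /thetaform /vpar !qz. Qed.

Lemma thetaform_sym r : (r <= D)%N -> thetaform e q (D - r) = - thetaform e q r.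
Proof.
move=> rD; rewrite /thetaform.
have -> : (D%:Z - (2 * (D - r))%:Z) = ((2 * r)%:Z - D%:Z) by lia.
have -> : ((2 * (D - r))%:Z - D%:Z) = (D%:Z - (2 * r)%:Z) by lia.
by rewrite -mulrN opprB.
Qed.

Lemma thetaform_per d : (q ^+ d * q ^+ d = 1) -> thetaform e q d = thetaform e q 0.
Proof.
move=> h; rewrite !thetaformE muln0 expr0 divr1 div1r.
have -> : q ^+ (2 * d) = 1 by rewrite mul2n -addnn exprD.
by rewrite divr1 div1r.
Qed.

End Params.

Lemma kappa_alg (q a b : algC) (d : nat) : q != 0 -> q - q^-1 != 0 ->
  q ^+ d - q ^- d != 0 -> a ^+ 2 = -1 -> b ^+ 2 = -1 ->
  a / b * q ^ (d%:Z - 1) + b / a * q ^ (1 - d%:Z) +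
  ((b * q ^ ((2 * 0)%:Z - d%:Z) + b^-1 * q ^ (d%:Z - (2 * 0)%:Z)) -
   (b * q ^ ((2 * 1)%:Z - d%:Z) + b^-1 * q ^ (d%:Z - (2 * 1)%:Z))) *
  (0 - (a * q ^ ((2 * d)%:Z - d%:Z) + a^-1 * q ^ (d%:Z - (2 * d)%:Z)))
  / ((q - q^-1) * (q ^+ d - q ^- d)) = 0.
Proof.
move=> q0 qq dd ha hb.
have a0 : a != 0.
  by apply/eqP => a0; move: ha; rewrite a0 expr0n /= => /eqP; rewrite eq_sym oppr_eq0 oner_eq0.
have b0 : b != 0.
  by apply/eqP => b0; move: hb; rewrite b0 expr0n /= => /eqP; rewrite eq_sym oppr_eq0 oner_eq0.
have ai : a^-1 = - a.
  by apply: (mulfI a0); rewrite mulfV // mulrN -expr2 ha opprK.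
have bi : b^-1 = - b.
  by apply: (mulfI b0); rewrite mulfV // mulrN -expr2 hb opprK.
have -> : (d%:Z - 1) = (d%:Z - 1%:Z) by [].
have -> : (1 - d%:Z) = (1%:Z - d%:Z) by [].
rewrite !qz // muln0 muln1 expr0 expr1 mul2n -addnn exprD ai bi.
set t := q ^+ d.
have t0 : t != 0 by rewrite expf_neq0.
have tt : t - t^-1 != 0 by [].
rewrite -/t in dd *.
have e1 : t - t^-1 = (t * t - 1) / t by field.
have e2 : q - q^-1 = (q * q - 1) / q by field.
move: tt qq; rewrite e1 e2 !mulf_eq0 !invr_eq0 !negb_or => /andP[tt _] /andP[qq _].
field; by rewrite t0 q0 tt qq.
Qed.

Lemma sq_inv (n : nat) (M : 'M[algC]_n.+1) : M *m M = - 1%:M -> M + invmx M = 0.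
Proof.
move=> h; have h1 : M *m (- M) = 1%:M by rewrite mulmxN h opprK.
have [uM _] := mulmx1_unit h1.
have -> : invmx M = - M.
  by rewrite -[invmx M]mulmx1 -h1 mulmxA mulVmx // mul1mx.
by rewrite subrr.
Qed.

Theorem theorem6p9 (n : nat) (e : rel 'I_n.+1) (E : nat -> 'M[algC]_n.+1)
    (x : 'I_n.+1) (theta thetas : nat -> algC) (q a b : algC)
    (c : 'M[algC]_n.+1 -> algC) (Ma Mb Mc Lam C : 'M[algC]_n.+1) :
  simple_graph e -> connected_graph e -> distance_regular e ->
  (3 <= diam e)%N -> bipartite e -> two_homogeneous e -> ~ is_hypercube e ->
  Qpoly_primitive_idempotents e E ->
  Amx e = \sum_(i < (diam e).+1) theta i *: E i ->
  Astar E x = \sum_(i < (diam e).+1) thetas i *: Estar e x i ->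
  q != 0 -> q ^+ 4 != 1 ->
  (forall i, (i <= diam e)%N ->
     theta i = thetaform e q i /\ thetas i = thetaform e q i) ->
  a ^+ 2 = upar e q / vpar e q -> b ^+ 2 = upar e q / vpar e q ->
  thin_known_facts e E x ->
  c_choice e E x q a b c ->
  scalar_on_types e E x Ma (aW e E x q a) ->
  scalar_on_types e E x Mb (bW e x q b) ->
  scalar_on_types e E x Mc c ->
  scalar_on_types e E x Lam (fun W => q ^+ (mod_diam e x W).+1) ->
  let bA := bA e q a in
  let bB := bB e E x q b in
  Tmem e E x C ->
  bA + (q ^+ 2 - q ^- 2)^-1 *: (q *: (bB *m C) - q^-1 *: (C *m bB)) =
    (q + q^-1)^-1 *: ((Ma + invmx Ma) *m (Lam + invmx Lam)
                      + (Mb + invmx Mb) *m (Mc + invmx Mc)) ->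
  bB + (q ^+ 2 - q ^- 2)^-1 *: (q *: (C *m bA) - q^-1 *: (bA *m C)) =
    (q + q^-1)^-1 *: ((Mb + invmx Mb) *m (Lam + invmx Lam)
                      + (Mc + invmx Mc) *m (Ma + invmx Ma)) ->
  C + (q ^+ 2 - q ^- 2)^-1 *: (q *: (bA *m bB) - q^-1 *: (bB *m bA)) =
    (q + q^-1)^-1 *: ((Mc + invmx Mc) *m (Lam + invmx Lam)
                      + (Ma + invmx Ma) *m (Mb + invmx Mb)) ->
  [/\ bA + (q ^+ 2 - q ^- 2)^-1 *: (q *: (bB *m C) - q^-1 *: (C *m bB)) = 0,
      bB + (q ^+ 2 - q ^- 2)^-1 *: (q *: (C *m bA) - q^-1 *: (bA *m C)) = 0 &
      C + (q ^+ 2 - q ^- 2)^-1 *: (q *: (bA *m bB) - q^-1 *: (bB *m bA)) = 0].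
Proof.
move=> [irr sym] cg hdr D3 bip _ _ hQ hA hAs q0 q4 hth ha hb thin [cc1 cc2]
  hMa hMb hMc _ bA bB hC e1 e2 e3.
have D1 : (1 <= diam e)%N by apply: leq_trans D3.
have thinj : forall j k, (j <= diam e)%N -> (k <= diam e)%N ->
    thetaform e q j = thetaform e q k -> j = k.
  move=> j k jD kD h; apply: (thetas_inj hQ D1 hdr hAs jD kD).
  by rewrite (proj2 (hth j jD)) (proj2 (hth k kD)) h.
have v0 : vpar e q != 0.
  apply/eqP => v0; have := thinj 0%N 1%N (leq0n _) D1.
  by rewrite !thetaformE // v0 !mul0r => /(_ erefl).
have hupv : upar e q / vpar e q = -1 by rewrite /upar mulNr divff.
rewrite hupv in ha hb.
have htr : forall M, Tmem e E x M -> Tmem e E x M^T by move=> M; apply: Ttr.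
have hcj : forall M, Tmem e E x M -> Tmem e E x (map_mx conjC M).
  by move=> M; apply: Tconj; apply: (Tconj_As hQ D1 hdr hAs).
have hEsT : forall j, Tmem e E x (Estar e x j) := Estar_T hQ D1 hdr hAs.
have key : forall W, irreducible e E x W ->
    [/\ aW e E x q a W = a, bW e x q b W = b & kappa e E x q a b W = 0].
  move=> W hW; have [mW W0 _] := hW.
  have [hrank htau hd] := thin W hW.
  set r := endpoint e x W in htau hd *.
  have ex_nz : exists i : 'I_(diam e).+1, nz_on (Estar e x i) W.
    apply: NNPP => hn; move/negP: W0; apply; apply/eqP.
    rewrite -[W]mulmx1 -(Estar_sum e x) mulmx_sumr big1 // => i _.
    case: (boolP (nz_on (Estar e x i) W)) => [h|]; first by case: hn; exists i.
    by rewrite /nz_on negbK Estar_tr => /eqP.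
  have rD : (r <= diam e)%N.
    case: ex_nz => i hi; rewrite -ltnS; apply: leq_ltn_trans (ltn_ord i); rewrite /r /endpoint.
    exact: (@bmin_le (diam e).+1 (fun j : 'I_(diam e).+1 => nz_on (Estar e x j) W)
              (fun j => nat_of_ord j) (diam e).+1 i hi).
  have rD' : (r < (diam e).+1)%N by [].
  have rnz : nz_on (Estar e x r) W.
    case: (bmin_id_cases (fun j : 'I_(diam e).+1 => nz_on (Estar e x j) W) (diam e).+1).
      by move=> h; move: rD; rewrite /r /endpoint h ltnn.
    by case=> i [hi h]; rewrite /r /endpoint h.
  have dnz : nz_on (E r) W.
    case: (bmin_id_cases (fun j : 'I_(diam e).+1 => nz_on (E j) W) (diam e).+1).
      by move=> h; move: rD; rewrite -htau /dual_endpoint h ltnn.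
    by case=> i [hi h]; rewrite -htau /dual_endpoint h.
  have h2r : (2 * r <= diam e)%N.
    rewrite leqNgt; apply/negP => hlt.
    have d0 : mod_diam e x W = 0%N by rewrite hd; apply/eqP; rewrite subn_eq0 ltnW.
    have hS : forall i : 'I_(diam e).+1, (i : nat) != r -> W *m (Estar e x i)^T = 0.
      move=> i ir; apply/eqP; apply: negbNE; apply/negP => hi0.
      have hi : nz_on (Estar e x i) W := hi0.
      have : (1 < #|[set i0 : 'I_(diam e).+1 | nz_on (Estar e x i0) W]|)%N.
        rewrite (cardD1 i) inE hi add1n ltnS; apply/card_gt0P; exists (Ordinal rD').
        rewrite !inE rnz andbT; apply/eqP => -[h]; move/eqP: ir; apply; rewrite -h.
        by [].
      by move=> hc; move: d0; rewrite /mod_diam; move: hc; case: #|_| => [|[|k]].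
    have WE : W = W *m (Estar e x r)^T.
      rewrite -{1}[W]mulmx1 -(Estar_sum e x) mulmx_sumr (bigD1 (Ordinal rD')); last by [].
      rewrite big1; first by rewrite Monoid.mulm1 Estar_tr.
      move=> i hi; rewrite -Estar_tr hS; first by [].
      by apply: contra hi => /eqP h; apply/eqP; apply: val_inj.
    have /submxP [Y hY] := mW _ (TA e E x).
    have h1 : W *m (Amx e)^T = W *m (Amx e)^T *m (Estar e x r)^T.
      by rewrite hY -mulmxA -WE.
    have WA : W *m (Amx e)^T = 0.
      rewrite h1 {1}WE -!mulmxA.
      have -> : (Estar e x r)^T *m ((Amx e)^T *m (Estar e x r)^T) =
                (Estar e x r *m Amx e *m Estar e x r)^T by rewrite !trmx_mul mulmxA.
      by rewrite EAE // trmx0 mulmx0.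
    have EA : E r *m Amx e = theta r *: E r.
      rewrite hA mulmx_sumr (bigD1 (Ordinal rD')); last by [].
      rewrite big1.
        by rewrite Monoid.mulm1 -scalemxAr (E_orth hQ rD rD) eqxx.
      move=> i hi; rewrite -scalemxAr (E_orth hQ rD); last by rewrite -ltnS.
      have -> : (r == i) = false.
        by apply/negbTE; apply: contra hi => /eqP h; apply/eqP; apply: val_inj.
      by rewrite scaler0.
    have th0 : theta r = 0.
      apply: contraTeq dnz => hth0; rewrite /nz_on negbK.
      have : theta r *: (W *m (E r)^T) = 0.
        by rewrite scalemxAr -linearZ /= -EA trmx_mul mulmxA WA mul0mx.
      by move/eqP; rewrite scaler_eq0 (negbTE hth0).
    have : thetaform e q (diam e - r) = thetaform e q r.
      by rewrite (thetaform_sym q0 rD) -(proj1 (hth r rD)) th0 oppr0.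
    move/(thinj _ _ (leq_subr _ _) rD) => h.
    by move: hlt; rewrite mul2n -addnn -{1}h subnK ?ltnn.
  have aWe : aW e E x q a W = a.
    by rewrite /aW htau hd subnKC // subrr expr0z mulr1.
  have bWe : bW e x q b W = b.
    by rewrite /bW -/r hd subnKC // subrr expr0z mulr1.
  split => //.
  rewrite /kappa; case: eqP => [//|dne].
  have hd1 : (mod_diam e x W <= diam e)%N by rewrite hd leq_subr.
  have tr0 : restr_trace W (Estar e x r *m Defs.bA e q a) = 0.
    rewrite /restr_trace; apply: restr_trace0.
    - exact: mW _ (hEsT r).
    - apply: mW; rewrite /Defs.bA; apply: TZ; apply: TB; [exact: TA | exact: Tscalar].
    - by rewrite Estar_mul eqxx.
    - rewrite /Defs.bA /wpar (_ : (0:algC)%:M = 0 :> 'M_n.+1) ?subr0; last first.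
        by apply/matrixP => i j; rewrite !mxE mul0rn.
      by rewrite -scalemxAr -scalemxAl EAE // scaler0.
  rewrite /phi1 -/r tr0 /vths /vth aWe bWe.
  apply: kappa_alg => //.
    apply/eqP => h; move/eqP: q4; apply.
    have h2 : q ^+ 2 = 1 by rewrite expr2 {2}(subr0_eq h) mulfV.
    by rewrite (_ : 4 = 2 * 2)%N // exprM h2 expr1n.
  apply/eqP => h; apply: dne; apply: (thinj _ _ hd1 (leq0n _)).
  apply: (thetaform_per e q0).
  by rewrite {2}(subr0_eq h) mulfV // expf_neq0.
have sqM : forall (M : 'M[algC]_n.+1) (f : 'M[algC]_n.+1 -> algC),
    scalar_on_types e E x M f -> (forall W, irreducible e E x W -> f W ^+ 2 = -1) ->
    M + invmx M = 0.
  move=> M f hM hf; apply: sq_inv; apply/eqP; rewrite -subr_eq0 opprK; apply/eqP.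
  apply: (kill_all htr hcj) => W hW.
  rewrite linearD /= trmx_mul trmx1 mulmxDr mulmx1 mulmxA (hM W hW) -scalemxAl (hM W hW).
  by rewrite scalerA -expr2 (hf W hW) scaleN1r addNr.
have Ma0 : Ma + invmx Ma = 0.
  by apply: (sqM _ _ hMa) => W hW; have [-> _ _] := key W hW.
have Mb0 : Mb + invmx Mb = 0.
  by apply: (sqM _ _ hMb) => W hW; have [_ -> _] := key W hW.
have Mc0 : Mc + invmx Mc = 0.
  apply: (sqM _ _ hMc) => W hW; have [_ _ hk] := key W hW.
  have := cc1 W hW; rewrite hk mul0r subr0 => /eqP; rewrite addr_eq0 => /eqP.
  done.
rewrite Ma0 Mb0 Mc0 !mul0mx addr0 scaler0 in e1 e2 e3.
by split.
Qed.
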